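(* Let $X,Y$ be Hilbert spaces, $F:\mathrm{dom}(F)\subset X\to Y$, $y\in\mathrm{Ran}(F)$, $x^*\in\mathrm{dom}(F)$, and let $x^\dagger$ be an $x^*$-minimum-norm solution of $F(x)=y$. Suppose Assumption 1 holds. Let $A:=F'(x^\dagger)$, and suppose there is a sequence of positive numbers $\lambda_k\in\sigma(AA^* )$ with $\lambda_k\to0$. Suppose there is a constant $\tau>0$ such that for every sufficiently small $\delta>0$ and every $y^\delta\in Y$ with $\|y^\delta-y\|\le\delta$ a number $\alpha(\delta,y^\delta)>0$ and a Tikhonov minimizer $x^\delta_{\alpha(\delta,y^\delta)}$ are chosen with $\|F(x^\delta_{\alpha(\delta,y^\delta)})-y^\delta\|\le\tau\delta$. If $$\sup\left\{\|x^\delta_{\alpha(\delta,y^\delta)}-x^\dagger\|:\ \|y^\delta-y\|\le\delta\right\}=o(\delta^{1/2})\quad\text{as }\delta\to0,$$ then $x^\dagger=x^*$.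
   Context: An $x^*$-minimum-norm solution is a point $x^\dagger\in\mathrm{dom}(F)$ with $F(x^\dagger)=y$ and $\|x^\dagger-x^*\|=\min\{\|x-x^*\|: x\in\mathrm{dom}(F),\ F(x)=y\}$. For $\alpha>0$ and $y^\delta\in Y$, a Tikhonov minimizer $x_\alpha^\delta$ is any minimizer over $\mathrm{dom}(F)$ of $\|F(x)-y^\delta\|^2+\alpha\|x-x^*\|^2$ (assumed to exist). $B_\rho(x^\dagger)=\{x\in X:\|x-x^\dagger\|<\rho\}$. $\sigma(AA^* )$ denotes the spectrum of $AA^*$. Assumption 1: there is $\rho>0$ with $B_\rho(x^\dagger)\subset\mathrm{dom}(F)$, $F$ is Fréchet differentiable on $B_\rho(x^\dagger)$, and there is $\kappa_0\ge0$ such that for all $x,z\in B_\rho(x^\dagger)$ there is a bounded linear operator $R(x,z):X\to X$ with $F'(x)=F'(z)R(x,z)$ and $\|I-R(x,z)\|\le\kappa_0\|x-z\|$. *)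

(* Defs.v *)
From HB Require Import structures.
From mathcomp Require Import all_boot all_order all_algebra.
From mathcomp Require Import all_classical all_reals all_analysis.
Set Implicit Arguments. Unset Strict Implicit. Unset Printing Implicit Defensive.
Import Order.TTheory GRing.Theory Num.Theory.
Import numFieldNormedType.Exports.
Local Open Scope classical_set_scope.
Local Open Scope ring_scope.

(* [ip] is an inner product on the (complete) normed space X inducing its norm;
   a complete normed space with such an inner product is a real Hilbert space. *)
Definition is_inner_product {R : realType} (X : normedModType R)
  (ip : X -> X -> R) : Prop :=
  (forall x z, ip x z = ip z x) /\
  (forall (a : R) (x x' z : X), ip (a *: x + x') z = a * ip x z + ip x' z) /\
  (forall x, ip x x = `|x| ^+ 2).

Definition is_adjoint {R : realType} (X Y : normedModType R)
  (ipX : X -> X -> R) (ipY : Y -> Y -> R) (A : X -> Y) (Astar : Y -> X) : Prop :=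
  forall x y, ipY (A x) y = ipX x (Astar y).

Definition spectrum {R : realType} (Y : normedModType R) (T : Y -> Y) : set R :=
  [set l | ~ exists S : Y -> Y, continuous S /\
      (forall v, S (T v - l *: v) = v) /\ (forall v, T (S v) - l *: S v = v)].

Definition min_norm_solution {R : realType} (X Y : normedModType R)
  (D : set X) (F : X -> Y) (y : Y) (xstar xdag : X) : Prop :=
  D xdag /\ F xdag = y /\
  forall x, D x -> F x = y -> `|xdag - xstar| <= `|x - xstar|.

Definition assumption1 {R : realType} (X Y : normedModType R)
  (D : set X) (F : X -> Y) (xdag : X) : Prop :=
  exists rho : R, 0 < rho /\ ball xdag rho `<=` D /\
   (forall x, ball xdag rho x -> differentiable F x) /\
   exists kappa0 : R, 0 <= kappa0 /\
   forall x z, ball xdag rho x -> ball xdag rho z ->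
     exists Rxz : {linear X -> X}, continuous Rxz /\
       (forall h, 'd F x h = 'd F z (Rxz h)) /\
       (forall h, `|h - Rxz h| <= kappa0 * `|x - z| * `|h|).

Definition tikhonov_minimizer {R : realType} (X Y : normedModType R)
  (D : set X) (F : X -> Y) (xstar : X) (alpha : R) (ydelta : Y) (x : X) : Prop :=
  D x /\ forall z, D z ->
    `|F x - ydelta| ^+ 2 + alpha * `|x - xstar| ^+ 2 <=
    `|F z - ydelta| ^+ 2 + alpha * `|z - xstar| ^+ 2.

(* Main.v *)
Require Import Defs.
From HB Require Import structures.
From mathcomp Require Import all_boot all_order all_algebra.
From mathcomp Require Import all_classical all_reals all_analysis.
Import Order.TTheory GRing.Theory Num.Theory.
Import numFieldNormedType.Exports.
Local Open Scope classical_set_scope.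
Local Open Scope ring_scope.
From mathcomp Require Import ring lra.
Set Implicit Arguments. Unset Strict Implicit.

Lemma ip0l (R : realType) (X : normedModType R) (ip : X -> X -> R) :
  is_inner_product ip -> forall z, ip 0 z = 0.
Proof.
move=> [_ [hl _]] z; have := hl 1 0 0 z.
rewrite scale1r addr0 mul1r => h.
by apply: (addrI (ip 0 z)); rewrite addr0 -h.
Qed.

Lemma ipDl (R : realType) (X : normedModType R) (ip : X -> X -> R) :
  is_inner_product ip -> forall x x' z, ip (x + x') z = ip x z + ip x' z.
Proof. by move=> [_ [hl _]] x x' z; have := hl 1 x x' z; rewrite scale1r mul1r. Qed.

Lemma ipZl (R : realType) (X : normedModType R) (ip : X -> X -> R) :
  is_inner_product ip -> forall a x z, ip (a *: x) z = a * ip x z.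
Proof.
move=> h a x z; have [_ [hl _]] := h; have := hl a x 0 z.
by rewrite addr0 (ip0l h) addr0.
Qed.

Lemma ipNl (R : realType) (X : normedModType R) (ip : X -> X -> R) :
  is_inner_product ip -> forall x z, ip (- x) z = - ip x z.
Proof. by move=> h x z; rewrite -scaleN1r (ipZl h) mulN1r. Qed.

Lemma ipBl (R : realType) (X : normedModType R) (ip : X -> X -> R) :
  is_inner_product ip -> forall x x' z, ip (x - x') z = ip x z - ip x' z.
Proof. by move=> h x x' z; rewrite (ipDl h) (ipNl h). Qed.

Lemma ipC (R : realType) (X : normedModType R) (ip : X -> X -> R) :
  is_inner_product ip -> forall x z, ip x z = ip z x.
Proof. by move=> [h _]. Qed.

Lemma ipDr (R : realType) (X : normedModType R) (ip : X -> X -> R) :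
  is_inner_product ip -> forall x z z', ip x (z + z') = ip x z + ip x z'.
Proof. by move=> h x z z'; rewrite !(ipC h x) (ipDl h). Qed.

Lemma ipZr (R : realType) (X : normedModType R) (ip : X -> X -> R) :
  is_inner_product ip -> forall a x z, ip x (a *: z) = a * ip x z.
Proof. by move=> h a x z; rewrite !(ipC h x) (ipZl h). Qed.

Lemma ipNr (R : realType) (X : normedModType R) (ip : X -> X -> R) :
  is_inner_product ip -> forall x z, ip x (- z) = - ip x z.
Proof. by move=> h x z; rewrite !(ipC h x) (ipNl h). Qed.

Lemma ipBr (R : realType) (X : normedModType R) (ip : X -> X -> R) :
  is_inner_product ip -> forall x z z', ip x (z - z') = ip x z - ip x z'.
Proof. by move=> h x z z'; rewrite (ipDr h) (ipNr h). Qed.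

Lemma ip0r (R : realType) (X : normedModType R) (ip : X -> X -> R) :
  is_inner_product ip -> forall x, ip x 0 = 0.
Proof. by move=> h x; rewrite (ipC h) (ip0l h). Qed.

Lemma ipnn (R : realType) (X : normedModType R) (ip : X -> X -> R) :
  is_inner_product ip -> forall x, ip x x = `|x| ^+ 2.
Proof. by move=> [_ [_ h]]. Qed.

Lemma normD2 (R : realType) (X : normedModType R) (ip : X -> X -> R) :
  is_inner_product ip -> forall a b,
  `|a + b| ^+ 2 = `|a| ^+ 2 + 2 * ip a b + `|b| ^+ 2.
Proof.
move=> h a b; rewrite -!(ipnn h) (ipDl h) !(ipDr h) (ipC h b a).
by rewrite mulr2n mulrDl mul1r !addrA.
Qed.

Lemma normB2 (R : realType) (X : normedModType R) (ip : X -> X -> R) :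
  is_inner_product ip -> forall a b,
  `|a - b| ^+ 2 = `|a| ^+ 2 - 2 * ip a b + `|b| ^+ 2.
Proof.
by move=> h a b; rewrite (normD2 h) (ipNr h) normrN mulrN.
Qed.

Lemma CS_aux (R : realType) (A B P : R) : 0 < B -> 0 <= A ->
  (forall t, 0 <= A ^+ 2 - 2 * (t * P) + t ^+ 2 * B ^+ 2) -> `|P| <= A * B.
Proof.
move=> B0 A0 key.
have [v hv] : exists v, v = P / B ^+ 2 by eexists.
have Pv : P = v * B ^+ 2 by rewrite hv mulfVK // expf_neq0 // gt_eqF.
have := key v; rewrite Pv => H.
have H2 : (`|v| * B) ^+ 2 <= A ^+ 2.
  rewrite exprMn real_normK ?num_real//.
  have e : v * (v * B ^+ 2) = v ^+ 2 * B ^+ 2 by rewrite expr2 !mulrA.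
  rewrite e in H; lra.
have H3 : `|v| * B <= A.
  by rewrite -(@ler_pXn2r _ 2) ?nnegrE ?mulr_ge0// ltW.
rewrite normrM (ger0_norm (ltW (exprn_gt0 2 B0))) expr2 mulrA.
by rewrite ler_pM2r.
Qed.

Lemma CS (R : realType) (X : normedModType R) (ip : X -> X -> R) :
  is_inner_product ip -> forall a b, `|ip a b| <= `|a| * `|b|.
Proof.
move=> h a b.
have [->|b0] := eqVneq b 0; first by rewrite (ip0r h) !normr0 mulr0.
have nb : 0 < `|b| by rewrite normr_gt0.
apply: CS_aux => // t.
have := normB2 h a (t *: b); rewrite (ipZr h) normrZ exprMn real_normK ?num_real// => <-.
exact: exprn_ge0.
Qed.

Lemma lip_cont (R : realType) (V W : normedModType R) (f : V -> W) (k : R) :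
  (forall a b, `|f a - f b| <= k * `|a - b|) -> continuous f.
Proof.
move=> H x; apply/(@cvgrPdist_lt _ _ _ (nbhs x)) => e e0.
have K0 : 0 < `|k| + 1 by rewrite ltr_pwDr // normr_ge0.
near=> z.
apply: (le_lt_trans (H x z)).
apply: (le_lt_trans (y := (`|k| + 1) * `|x - z|)).
  by rewrite ler_wpM2r // (le_trans (ler_norm _)) // lerDl.
rewrite -ltr_pdivlMl //.
near: z; apply: cvgr_dist_lt => //; by rewrite mulr_gt0 ?invr_gt0.
Unshelve. all: by end_near.
Qed.

Definition myfun (R : realType) (X : completeNormedModType R) (g : X -> X) : X -> X := g.
HB.instance Definition _ (R : realType) (X : completeNormedModType R) (g : X -> X) :=
  isFun.Build X X setT setT (myfun g) (fun _ _ => I).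

Lemma fp (R : realType) (X : completeNormedModType R) (g : X -> X) (q : R) :
  0 <= q < 1 -> (forall a b, `|g a - g b| <= q * `|a - b|) -> exists p, p = g p.
Proof.
move=> /andP[q0 q1] H.
have : is_contraction (myfun g : {fun [set: X] >-> [set: X]}).
  exists (NngNum q0); split => //.
  move=> [a b] _ /=. exact: H.
move=> /banach_fixed_point [] //.
  by exists 0.
by move=> p _ hp; exists p; exact hp.
Qed.

Ltac nn := first [ exact: normr_ge0 | assumption | (apply: ltW; assumption) | exact: ler0n
  | (apply: addr_ge0; nn)
  | (apply: mulr_ge0; nn) | (apply: exprn_ge0; nn) | (apply: sqr_ge0) ].

Lemma subDD (R : realType) (V : normedModType R) (x y z : V) : (x + z) - (y + z) = x - y.
Proof. by rewrite (addrC y) addrKA. Qed.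

Lemma subBB (R : realType) (V : normedModType R) (a b p q : V) : (a - p) - (b - q) = (a - b) - (p - q).
Proof. by rewrite !opprB addrACA [RHS]addrACA (addrC (- p)). Qed.

Lemma coercive_inv (R : realType) (Y : completeNormedModType R) (ip : Y -> Y -> R)
  (hY : is_inner_product ip) (B : Y -> Y) (K eta : R) :
  (forall a u v, B (a *: u + v) = a *: B u + B v) ->
  (forall u v, ip (B u) v = ip u (B v)) ->
  (forall v, `|B v| <= K * `|v|) -> 0 < eta ->
  (forall v, eta * `|v| <= `|B v|) ->
  exists S : Y -> Y, continuous S /\ (forall v, S (B v) = v) /\ (forall v, B (S v) = v).
Proof.
move=> Blin Bsym BK e0 Be.
have BD u v : B (u + v) = B u + B v by have := Blin 1 u v; rewrite !scale1r.
have B0 : B 0 = 0 by apply: (addrI (B 0)); rewrite -BD !addr0.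
have BZ a u : B (a *: u) = a *: B u by rewrite -[a *: u]addr0 Blin B0 addr0.
have BN u : B (- u) = - B u by rewrite -scaleN1r BZ scaleN1r.
have BB u v : B (u - v) = B u - B v by rewrite BD BN.
pose K' : R := `|K| + eta.
have K'0 : 0 < K' by rewrite /K' ltr_wpDl // normr_ge0.
have eK' : eta <= K' by rewrite /K' lerDr normr_ge0.
have BK' v : `|B v| <= K' * `|v|.
  apply: (le_trans (BK v)); rewrite ler_wpM2r // (le_trans (ler_norm _)) //.
  by rewrite lerDl ltW.
pose CC u := B (B u).
have CB u v : CC (u - v) = CC u - CC v by rewrite /CC !BB.
have CK v : `|CC v| <= K' ^+ 2 * `|v|.
  rewrite expr2 -mulrA; apply: (le_trans (BK' _)); rewrite ler_wpM2l ?(ltW K'0) //; exact: BK'.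
have Cip z : eta ^+ 2 * `|z| ^+ 2 <= ip z (CC z).
  rewrite /CC -Bsym (ipnn hY) -exprMn ler_pXn2r //.
  - by apply: mulr_ge0; [exact: ltW | exact: normr_ge0].
  - exact: normr_ge0.
have Clow z : eta ^+ 2 * `|z| <= `|CC z|.
  have [->|z0] := eqVneq z 0; first by rewrite normr0 mulr0 normr_ge0.
  have nz : 0 < `|z| by rewrite normr_gt0.
  rewrite -(ler_pM2r nz) -mulrA -expr2; apply: (le_trans (Cip z)).
  by rewrite mulrC; apply: (le_trans (ler_norm _)); exact: CS hY _ _.
have Csurj v : exists w, CC w = v.
  pose s := eta ^+ 4 / K' ^+ 4.
  pose t := eta ^+ 2 / K' ^+ 4.
  have K4 : 0 < K' ^+ 4 by rewrite exprn_gt0.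
  have s0 : 0 < s by rewrite /s divr_gt0 ?exprn_gt0.
  have s1 : s <= 1.
    rewrite /s -expr_div_n exprn_ile1 //.
      by rewrite divr_ge0 // ltW.
    by rewrite ler_pdivrMr // mul1r.
  have t0 : 0 < t by rewrite /t divr_gt0 ?exprn_gt0.
  have K'n : K' != 0 by rewrite gt_eqF.
  have ts : t * eta ^+ 2 = s by rewrite /t /s; field.
  have tts : t ^+ 2 * K' ^+ 4 = s by rewrite /t /s; field.
  clearbody s t.
  pose phi w := (w - t *: CC w) + t *: v.
  have hphi a b : `|phi a - phi b| <= (1 - s / 2) * `|a - b|.
    have -> : phi a - phi b = (a - b) - t *: CC (a - b).
      by rewrite /phi subDD subBB CB scalerBr.
    set z := a - b.
    have q0 : 0 <= 1 - s / 2 by lra.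
    rewrite -(@ler_pXn2r _ 2) //; try nn.
    rewrite (normB2 hY) (ipZr hY) normrZ exprMn exprMn (gtr0_norm t0).
    have h1 : 2 * (t * (eta ^+ 2 * `|z| ^+ 2)) <= 2 * (t * ip z (CC z)).
      by rewrite ler_pM2l // ler_pM2l.
    have h2 : t ^+ 2 * `|CC z| ^+ 2 <= t ^+ 2 * (K' ^+ 2 * `|z|) ^+ 2.
      rewrite ler_pM2l ?exprn_gt0 // ler_pXn2r //; try nn.
    have e1 : t * (eta ^+ 2 * `|z| ^+ 2) = s * `|z| ^+ 2 by rewrite mulrA ts.
    have e2 : t ^+ 2 * (K' ^+ 2 * `|z|) ^+ 2 = s * `|z| ^+ 2.
      by rewrite exprMn -exprM mulrA tts.
    rewrite e1 in h1; rewrite e2 in h2.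
    have hz : 0 <= `|z| ^+ 2 by rewrite exprn_ge0.
    set Z := `|z| ^+ 2 in h1 h2 hz *.
    have e3 : forall Z0 s0 : R, (1 - s0 / 2) ^+ 2 * Z0 = Z0 - s0 * Z0 + (s0 / 2) ^+ 2 * Z0.
      by move=> Z0 s2; rewrite !expr2; field.
    rewrite e3.
    have hsz : 0 <= (s / 2) ^+ 2 * Z by apply: mulr_ge0 => //; apply: sqr_ge0.
    clearbody Z; lra.
  have hq : 0 <= 1 - s / 2 < 1 by apply/andP; split; lra.
  have [p hp] := fp hq hphi.
  have h0 : - (t *: CC p) + t *: v = 0.
    rewrite -[LHS](addKr p) [p + (_ + _)]addrA.
    by change (- p + phi p = 0); rewrite -hp addNr.
  move/eqP: h0; rewrite addrC subr_eq0 => /eqP h0.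
  have := congr1 (fun w => t^-1 *: w) h0; rewrite /= !scalerA mulVf ?gt_eqF // !scale1r.
  by move=> ->; exists p.
have [G hG] := choice Csurj.
have Glip a b : `|G a - G b| <= eta ^- 2 * `|a - b|.
  have := Clow (G a - G b); rewrite CB !hG => H.
  by rewrite ler_pdivlMl ?exprn_gt0.
exists (fun v => B (G v)); split; [|split].
- apply: (@lip_cont _ _ _ _ (K' * eta ^- 2)) => a b.
  rewrite -BB (le_trans (BK' _)) // -mulrA ler_wpM2l ?(ltW K'0) //.
- move=> v; have := hG (B v); rewrite /CC => H.
  have H2 : B (B (G (B v)) - v) = 0 by rewrite BB H subrr.
  have := Be (B (G (B v)) - v); rewrite H2 normr0 => H3.
  apply/eqP; rewrite -subr_eq0 -normr_eq0 eq_le normr_ge0 andbT.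
  by rewrite -(ler_pM2l e0) mulr0.
- by move=> v; exact: hG.
Qed.

Lemma spec_approx (R : realType) (Y : completeNormedModType R) (ip : Y -> Y -> R)
  (hY : is_inner_product ip) (T : Y -> Y) (K l : R) :
  (forall a u v, T (a *: u + v) = a *: T u + T v) ->
  (forall u v, ip (T u) v = ip u (T v)) ->
  (forall v, `|T v| <= K * `|v|) -> spectrum T l ->
  forall eta, 0 < eta -> exists u, `|u| = 1 /\ `|T u - l *: u| < eta.
Proof.
move=> Tlin Tsym TK sp eta e0.
have [//|nex] := pselect (exists u : Y, `|u| = 1 /\ `|T u - l *: u| < eta).
exfalso; apply: sp.
have TD u v : T (u + v) = T u + T v by have := Tlin 1 u v; rewrite !scale1r.
have T0 : T 0 = 0 by apply: (addrI (T 0)); rewrite -TD !addr0.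
have TZ a u : T (a *: u) = a *: T u by rewrite -[a *: u]addr0 Tlin T0 addr0.
pose B v := T v - l *: v.
have Blin a u v : B (a *: u + v) = a *: B u + B v.
  rewrite /B Tlin scalerDr scalerA mulrC -scalerA !scalerBr.
  by rewrite opprD addrACA.
have Bsym u v : ip (B u) v = ip u (B v).
  by rewrite /B (ipBl hY) (ipZl hY) (ipBr hY) (ipZr hY) Tsym.
have BK v : `|B v| <= (K + `|l|) * `|v|.
  by rewrite /B mulrDl (le_trans (ler_normB _ _)) // lerD ?TK // normrZ.
have Be v : eta * `|v| <= `|B v|.
  have [->|v0] := eqVneq v 0; first by rewrite normr0 mulr0 normr_ge0.
  have nv : 0 < `|v| by rewrite normr_gt0.
  pose u := `|v|^-1 *: v.
  have nu : `|u| = 1 by rewrite /u normrZ normrV ?unitfE ?gt_eqF // normr_id mulVf ?gt_eqF.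
  have Bu : B u = `|v|^-1 *: B v by rewrite /u /B TZ scalerBr scalerA mulrC -scalerA.
  have : ~ (`|B u| < eta) by move=> h; apply: nex; exists u.
  move/negP; rewrite -leNgt Bu normrZ normrV ?unitfE ?gt_eqF // normr_id.
  by rewrite ler_pdivlMl // mulrC.
have [S [Sc [S1 S2]]] := coercive_inv hY Blin Bsym BK e0 Be.
by exists S.
Qed.

Lemma dir_cvg (R : realType) (X Y : normedModType R) (F : X -> Y) (x h : X) :
  differentiable F x ->
  (fun t : R => t^-1 *: (F (t *: h + x) - F x)) @ 0^' --> 'd F x h.
Proof. by move=> dF; rewrite -deriveE //; exact: diff_derivable. Qed.

Lemma foc (R : realType) (X Y : normedModType R) (ipX : X -> X -> R) (ipY : Y -> Y -> R)
  (hX : is_inner_product ipX) (hY : is_inner_product ipY)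
  (D : set X) (F : X -> Y) (xs : X) (alpha : R) (yd : Y) (x : X) :
  (exists e, 0 < e /\ ball x e `<=` D) -> differentiable F x ->
  tikhonov_minimizer D F xs alpha yd x -> 0 <= alpha ->
  forall h, ipY (F x - yd) ('d F x h) + alpha * ipX (x - xs) h = 0.
Proof.
move=> [e [e0 hB]] dF [Dx hmin] a0.
suff key : forall h, 0 <= ipY (F x - yd) ('d F x h) + alpha * ipX (x - xs) h.
  move=> h; apply/eqP; rewrite eq_le key andbT.
  by have := key (- h); rewrite linearN (ipNr hY) (ipNr hX) mulrN -opprD oppr_ge0.
move=> h; set r := F x - yd; set L := 'd F x h; set u := x - xs.
set q := ipY r L + alpha * ipX u h.
rewrite leNgt; apply/negP => qneg.
have cvr := cvg_dnbhs_at_right (@dir_cvg _ _ _ F x h dF).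
pose eps := - q / (2 * (`|r| + 1)).
have r1 : 0 < `|r| + 1 by rewrite ltr_pwDr // normr_ge0.
have eps0 : 0 < eps by rewrite /eps divr_gt0 ?oppr_gt0 // mulr_gt0.
have reps : `|r| * eps <= - q / 2.
  have -> : - q / 2 = (`|r| + 1) * eps.
    by rewrite /eps; field; rewrite gt_eqF.
  by rewrite ler_pM2r // lerDl.
pose M := (`|L| + eps) ^+ 2 + alpha * `|h| ^+ 2.
have M0 : 0 <= M by apply: addr_ge0; [exact: sqr_ge0 | apply: mulr_ge0 => //; exact: sqr_ge0].
near (0 : R)^'+ => t.
have t0 : 0 < t by near: t; exact: nbhs_right_gt.
have hQ : `|L - t^-1 *: (F (t *: h + x) - F x)| < eps.
  by near: t; move/cvgrPdist_lt : cvr; apply.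
have hball : ball x e (t *: h + x).
  rewrite -ball_normE /= opprD addrCA subrr addr0 normrN normrZ gtr0_norm //.
  apply: (le_lt_trans (y := t * (`|h| + 1))); first by rewrite ler_pM2l // lerDl.
  rewrite -ltr_pdivlMr ?ltr_pwDr ?normr_ge0 //.
  by near: t; apply: nbhs_right_lt; rewrite divr_gt0 // ltr_pwDr ?normr_ge0.
have htM : t * (M + 1) < - q.
  rewrite -ltr_pdivlMr ?ltr_pwDr //.
  by near: t; apply: nbhs_right_lt; rewrite divr_gt0 ?oppr_gt0 // ltr_pwDr.
set Q := t^-1 *: (F (t *: h + x) - F x) in hQ.
have Dw := hB _ hball.
have H0 := hmin _ Dw.
have eQ : F (t *: h + x) - yd = r + t *: Q.
  by rewrite /Q scalerA mulfV ?gt_eqF // scale1r /r [RHS]addrC [RHS]addrA subrK.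
have eW : t *: h + x - xs = u + t *: h by rewrite /u -addrA addrC.
rewrite eQ eW (normD2 hY r) (normD2 hX u) (ipZr hY) (ipZr hX) [`|t *: Q|]normrZ [`|t *: h|]normrZ gtr0_norm // in H0.
rewrite -/r -/u in H0.
have H1 : ipY r Q <= ipY r L + `|r| * eps.
  have -> : ipY r Q = ipY r L - ipY r (L - Q) by rewrite (ipBr hY) opprB addrC subrK.
  rewrite lerD2l; apply: (le_trans _ (ler_wpM2l (normr_ge0 r) (ltW hQ))).
  by apply: (le_trans (ler_norm _)); rewrite normrN; exact: CS hY _ _.
have H2 : `|Q| <= `|L| + eps.
  have -> : Q = L - (L - Q) by rewrite opprB addrC subrK.
  by rewrite (le_trans (ler_normB _ _)) // lerD2l ltW.
have H2' : `|Q| ^+ 2 <= (`|L| + eps) ^+ 2.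
  by rewrite ler_pXn2r //; try nn.
have H0' : 0 <= t * (2 * ipY r Q + t * `|Q| ^+ 2 + 2 * (alpha * ipX u h)
                 + alpha * t * `|h| ^+ 2).
  set A1 := `|r| ^+ 2 in H0 *; set A2 := `|u| ^+ 2 in H0 *.
  move: H0; set P := ipY r Q; set N := `|Q|; set I := ipX u h; set Hn := `|h|.
  move=> H0.
  have ee : t * (2 * P + t * N ^+ 2 + 2 * (alpha * I) + alpha * t * Hn ^+ 2)
    = (A1 + 2 * (t * P) + (t * N) ^+ 2 + alpha * (A2 + 2 * (t * I) + (t * Hn) ^+ 2))
      - (A1 + alpha * A2) by ring.
  by rewrite ee subr_ge0.
rewrite pmulr_rge0 // in H0'.
have H3 : t * `|Q| ^+ 2 <= t * (`|L| + eps) ^+ 2 by rewrite ler_pM2l.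
move: htM; rewrite /M => htM.
have e4 : t * ((`|L| + eps) ^+ 2 + alpha * `|h| ^+ 2 + 1)
   = t * (`|L| + eps) ^+ 2 + alpha * t * `|h| ^+ 2 + t by ring.
rewrite e4 in htM.
move: H0' H1 H3 htM reps t0; rewrite /q.
set P := ipY r Q; set T1 := t * `|Q| ^+ 2; set I := ipX u h; set T2 := alpha * t * `|h| ^+ 2.
set T3 := t * (`|L| + eps) ^+ 2; set pL := ipY r L; set RE := `|r| * eps.
set AI := alpha * I.
move=> *; lra.
Unshelve. all: by end_near.
Qed.
Lemma ip_cont (R : realType) (Y : normedModType R) (ip : Y -> Y -> R)
  (hY : is_inner_product ip) (u : Y) : continuous (fun v => ip v u).
Proof.
apply: (@lip_cont _ _ _ _ `|u|) => a b.
by rewrite -(ipBl hY) (le_trans (CS hY _ _)) // mulrC.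
Qed.

Lemma rem_bound (R : realType) (X Y : normedModType R) (ipY : Y -> Y -> R)
  (hY : is_inner_product ipY) (F : X -> Y) (p d : X) (u : Y) (A : X -> Y) (c : R) :
  (forall s, 0 <= s <= 1 -> differentiable F (s *: d + p)) ->
  (forall s, 0 <= s <= 1 -> `|ipY ('d F (s *: d + p) d - A d) u| <= c) ->
  `|ipY (F (d + p) - F p - A d) u| <= c.
Proof.
move=> dF hc.
pose g (s : R) := ipY (F (s *: d + p)) u.
pose df (s : R) := ipY ('d F (s *: d + p) d) u.
have der (s : R) : 0 <= s <= 1 -> is_derive s 1 g (df s).
  move=> s01.
  have hcv : (fun t => t^-1 *: (g (t *: 1 + s) - g s)) @ 0^' --> df s.
    have -> : (fun t => t^-1 *: (g (t *: 1 + s) - g s)) =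
      (fun v => ipY v u) \o (fun t => t^-1 *: (F (t *: d + (s *: d + p)) - F (s *: d + p))).
      apply/funext => t /=; rewrite /g (ipZl hY) (ipBl hY).
      by rewrite [t *: 1]mulr1 scalerDl addrA.
    have := continuous_cvg _ (@ip_cont _ _ _ hY u ('d F (s *: d + p) d)) (@dir_cvg _ _ _ F (s *: d + p) d (dF s s01)).
    exact.
  apply: DeriveDef; first exact: cvgP hcv.
  exact: cvg_lim hcv.
have cont : {within `[0, 1], continuous g}.
  apply: continuous_in_subspaceT => s; rewrite inE /= in_itv /= => s01.
  have /derivable1_diffP dg : derivable g s 1 by have [] := der s s01.
  exact: differentiable_continuous.
have der' : forall s : R, s \in `]0, 1[%R -> is_derive s 1 g (df s).
  move=> s; rewrite in_itv /= => /andP[h0 h1].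
  by apply: der; rewrite (ltW h0) (ltW h1).
have [c0 c0I e] := MVT ltr01 der' cont.
move: c0I; rewrite in_itv /= => /andP[c00 c01].
have -> : ipY (F (d + p) - F p - A d) u = ipY ('d F (c0 *: d + p) d - A d) u.
  rewrite !(ipBl hY); move: e; rewrite /g /df scale1r scale0r add0r subr0 mulr1 => ->.
  by [].
by apply: hc; rewrite (ltW c00) (ltW c01).
Qed.
Lemma final_num (R : realType) (l a C e Pd DW ie E1 E2 E3 D2 Mk t : R) :
  0 < l -> 0 <= a -> a <= C * l -> 0 <= C -> 0 <= e -> Pd <= DW -> 0 <= DW ->
  DW <= 2 * e * l -> 0 <= ie ->
  (l + a) * Pd = l * l + a * ie - l * E1 - E3 - E2 ->
  E1 <= Mk * D2 -> D2 <= e * l -> 0 <= Mk ->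
  E3 <= l * l / 4 -> E2 <= t * l * Mk * DW -> 0 <= t ->
  e * (2 + 2 * C + Mk + 2 * t * Mk) <= 1 / 2 -> False.
Proof.
move=> l0 a0 aC C0 e0 PD DW0 DWl ie0 Eq E1b D2b Mk0 E3b E2b t0 he.
have h1 : (l + a) * Pd <= (l + C * l) * (2 * e * l).
  apply: (le_trans (y := (l + a) * DW)); first by rewrite ler_pM2l //; lra.
  apply: ler_pM => //; lra.
have h2 : l * E1 <= l * (Mk * (e * l)).
  by rewrite ler_pM2l // (le_trans E1b) // ler_wpM2l.
have h3 : E2 <= t * l * Mk * (2 * e * l).
  by rewrite (le_trans E2b) // ler_wpM2l // !mulr_ge0 // ltW.
have aie : 0 <= a * ie by rewrite mulr_ge0.
have key : l * l * (3 / 4 - e * (2 + 2 * C + Mk + 2 * t * Mk)) <= 0.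
  have e1 : l * l * (3 / 4 - e * (2 + 2 * C + Mk + 2 * t * Mk)) =
     l * l - l * (Mk * (e * l)) - l * l / 4 - t * l * Mk * (2 * e * l) - (l + C * l) * (2 * e * l) by field.
  rewrite e1; lra.
have : 0 < l * l * (3 / 4 - e * (2 + 2 * C + Mk + 2 * t * Mk)).
  by rewrite mulr_gt0 ?mulr_gt0 //; lra.
lra.
Qed.

Lemma ip_eq0 (R : realType) (X : normedModType R) (ip : X -> X -> R)
  (hX : is_inner_product ip) (z : X) : (forall w, ip w z = 0) -> z = 0.
Proof.
move=> H; have := H z; rewrite (ipnn hX) => /eqP; rewrite sqrf_eq0 normr_eq0.
by move/eqP.
Qed.

Lemma adj_lin (R : realType) (X Y : normedModType R) (ipX : X -> X -> R) (ipY : Y -> Y -> R)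
  (hX : is_inner_product ipX) (hY : is_inner_product ipY)
  (A : {linear X -> Y}) (Astar : Y -> X) : is_adjoint ipX ipY A Astar ->
  forall a u v, Astar (a *: u + v) = a *: Astar u + Astar v.
Proof.
move=> hadj a u v; apply/subr0_eq; apply: (ip_eq0 hX) => w.
by rewrite (ipBr hX) (ipDr hX) (ipZr hX) -!hadj (ipDr hY) (ipZr hY) subrr.
Qed.

Lemma adj_bound (R : realType) (X Y : normedModType R) (ipX : X -> X -> R) (ipY : Y -> Y -> R)
  (hX : is_inner_product ipX) (hY : is_inner_product ipY)
  (A : X -> Y) (Astar : Y -> X) (M : R) : is_adjoint ipX ipY A Astar ->
  0 <= M -> (forall h, `|A h| <= M * `|h|) -> forall v, `|Astar v| <= M * `|v|.
Proof.
move=> hadj M0 hM v.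
have [n0|nz] := eqVneq `|Astar v| 0; first by rewrite n0 mulr_ge0.
have np : 0 < `|Astar v| by rewrite lt_def nz normr_ge0.
rewrite -(ler_pM2r np) -expr2 -(ipnn hX) -hadj.
apply: (le_trans (ler_norm _)); apply: (le_trans (CS hY _ _)).
apply: (le_trans (y := M * `|Astar v| * `|v|)).
  by rewrite ler_wpM2r // hM.
by rewrite mulrAC.
Qed.

Lemma eq_alg (R : realType) (l al Pd ie E1 E2 E3 : R) :
  l * (E1 + Pd - l) + E3 + E2 + al * (Pd - ie) = 0 ->
  (l + al) * Pd = l * l + al * ie - l * E1 - E3 - E2.
Proof. by move=> H; apply/eqP; rewrite -subr_eq0; apply/eqP; rewrite -H; ring. Qed.

Lemma andP_intro (a b : bool) : a -> b -> a && b.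
Proof. by move=> -> ->. Qed.

Lemma lin_scale (R : realType) (U V : normedModType R) (f : U -> V) :
  (forall a u v, f (a *: u + v) = a *: f u + f v) -> forall a u, f (a *: u) = a *: f u.
Proof.
move=> fl a u.
have fD u' v : f (u' + v) = f u' + f v by have := fl 1 u' v; rewrite !scale1r.
have f0 : f 0 = 0 by apply: (addrI (f 0)); rewrite -fD !addr0.
by rewrite -[a *: u]addr0 fl f0 addr0.
Qed.

Lemma sqrt_lt (R : realType) (l b : R) : 0 < b -> l < b ^+ 2 -> Num.sqrt l < b.
Proof.
move=> b0 lb; rewrite -(gtr0_norm b0) -sqrtr_sqr ltr_sqrt ?exprn_gt0 //.
Qed.

Theorem theorem2p2 (R : realType)
  (X Y : completeNormedModType R) (ipX : X -> X -> R) (ipY : Y -> Y -> R)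
  (hX : is_inner_product ipX) (hY : is_inner_product ipY)
  (D : set X) (F : X -> Y) (y : Y) (xstar xdag : X)
  (hy : exists x, D x /\ F x = y) (hxstar : D xstar)
  (hdag : min_norm_solution D F y xstar xdag)
  (hA1 : assumption1 D F xdag)
  (Astar : Y -> X) (hAstar : is_adjoint ipX ipY ('d F xdag) Astar)
  (lam : nat -> R)
  (hlam_pos : forall k, 0 < lam k)
  (hlam_spec : forall k, spectrum (fun v => 'd F xdag (Astar v)) (lam k))
  (hlam_cvg : lam @ \oo --> 0)
  (tau : R) (htau : 0 < tau)
  (alpha : R -> Y -> R) (xsel : R -> Y -> X)
  (hsel : exists delta0 : R, 0 < delta0 /\
     forall (delta : R) (ydelta : Y), 0 < delta < delta0 ->
       `|ydelta - y| <= delta ->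
       0 < alpha delta ydelta /\
       tikhonov_minimizer D F xstar (alpha delta ydelta) ydelta (xsel delta ydelta) /\
       `|F (xsel delta ydelta) - ydelta| <= tau * delta)
  (ho : forall eps : R, 0 < eps -> exists delta1 : R, 0 < delta1 /\
     forall (delta : R) (ydelta : Y), 0 < delta < delta1 ->
       `|ydelta - y| <= delta ->
       `|xsel delta ydelta - xdag| <= eps * Num.sqrt delta) :
  xdag = xstar.
Proof.
have [Ddag [Fdag _]] := hdag.
case: hA1 => rho [rho0 [hBD [hdiff [kap [kap0 hR]]]]].
case: hsel => d0 [d00 hsel].
case: (eqVneq xdag xstar) => // neq; exfalso.
pose A := 'd F xdag.
have inB0 : ball xdag rho xdag by rewrite -ball_normE /= subrr normr0.
have dA := hdiff _ inB0.
have [MA MA0 hMA] : exists2 M : R, 0 < M & forall h, `|A h| <= M * `|h|.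
  have /linear_boundedP/pinfty_ex_gt0 [M M0 HM] : bounded_near A (nbhs 0).
    by apply/linear_bounded_continuous; exact: diff_continuous.
  by exists M.
have Alin := adj_lin hX hY hAstar.
have hAs := adj_bound hX hY hAstar (ltW MA0) hMA.
pose T v := A (Astar v).
have Tlin a u v : T (a *: u + v) = a *: T u + T v by rewrite /T Alin linearP.
have Tsym u v : ipY (T u) v = ipY u (T v).
  by rewrite /T hAstar (ipC hY u) hAstar (ipC hX).
have TK v : `|T v| <= (MA * MA) * `|v|.
  by rewrite -mulrA (le_trans (hMA _)) // ler_pM2l // hAs.
have ipT u : ipY (T u) u = `|Astar u| ^+ 2 by rewrite /T hAstar (ipnn hX).
set e := xstar - xdag.
have ne0 : 0 < `|e| by rewrite normr_gt0 subr_eq0 eq_sym.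
pose Mk := MA * kap.
pose C := 2 * tau * MA * (1 + kap) / `|e|.
pose K1 := 1 + C + tau * Mk + Mk.
have Mk0 : 0 <= Mk by rewrite mulr_ge0 // ltW.
have C0 : 0 <= C by rewrite /C !mulr_ge0 ?invr_ge0 ?addr_ge0 // ltW.
have K11 : 1 <= K1 by rewrite /K1 -!addrA lerDl !addr_ge0 // mulr_ge0 // ltW.
have K10 : 0 < K1 by apply: (lt_le_trans ltr01).
pose eps := 1 / (4 * K1).
have eps0 : 0 < eps by rewrite /eps divr_gt0 // mulr_gt0.
have eps1 : eps <= 1.
  rewrite /eps ler_pdivrMr ?mulr_gt0 // mul1r.
  apply: (le_trans K11); rewrite ler_peMl //; lra.
have heps : eps * (2 + 2 * C + Mk + 2 * tau * Mk) <= 1 / 2.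
  apply: (le_trans (y := eps * (2 * K1))).
    rewrite ler_pM2l // /K1.
    have : 0 <= tau * Mk by rewrite mulr_ge0 // ltW.
    lra.
  have -> : eps * (2 * K1) = 1 / 2 by rewrite /eps; field; rewrite gt_eqF.
  by [].
have [d1 [d10 ho1]] := ho eps eps0.
near \oo => k.
have ld0 : lam k < d0 by near: k; exact: (cvgr_lt 0 hlam_cvg).
have ld1 : lam k < d1 by near: k; exact: (cvgr_lt 0 hlam_cvg).
have le2 : lam k < (`|e| / 2) ^+ 2.
  by near: k; apply: (cvgr_lt 0 hlam_cvg); rewrite exprn_gt0 // divr_gt0.
have lr2 : lam k < (rho / 2) ^+ 2.
  by near: k; apply: (cvgr_lt 0 hlam_cvg); rewrite exprn_gt0 // divr_gt0.
have l1 : lam k < 1 ^+ 2 by near: k; apply: (cvgr_lt 0 hlam_cvg); rewrite expr1n.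
have l0 : 0 < lam k := hlam_pos k.
have lspec := hlam_spec k.
set l := lam k in ld0 ld1 le2 lr2 l1 l0 lspec.
pose sl := Num.sqrt l.
have sl0 : 0 <= sl := sqrtr_ge0 l.
have sl2 : sl ^+ 2 = l by rewrite sqr_sqrtr // ltW.
have sle : sl < `|e| / 2 by apply: sqrt_lt; rewrite ?divr_gt0.
have slr : sl < rho / 2 by apply: sqrt_lt; rewrite ?divr_gt0.
have sl1 : sl < 1 by apply: sqrt_lt.
have TZ := lin_scale Tlin.
have AsZ := lin_scale Alin.
pose eta := l / (4 * (tau + 1)).
have eta0 : 0 < eta by rewrite /eta divr_gt0 // mulr_gt0 // addr_gt0.
have etal : eta <= l.
  rewrite /eta ler_pdivrMr ?mulr_gt0 ?addr_gt0 // ler_peMr ?(ltW l0) //; lra.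
have taueta : tau * eta <= l / 4.
  rewrite /eta mulrA ler_pdivrMr ?mulr_gt0 ?addr_gt0 //.
  have -> : l / 4 * (4 * (tau + 1)) = tau * l + l by field.
  by rewrite lerDl ltW.
have [u0 [nu0 hu0]] := spec_approx hY Tlin Tsym TK lspec eta0.
have TN u' : T (- u') = - T u' by rewrite -scaleN1r TZ scaleN1r.
have AN u' : Astar (- u') = - Astar u' by rewrite -scaleN1r AsZ scaleN1r.
have [u [nu [hu hsign]]] : exists u, `|u| = 1 /\ `|T u - l *: u| < eta /\
     0 <= ipX e (Astar u).
  case: (lerP 0 (ipX e (Astar u0))) => hs; first by exists u0.
  exists (- u0); rewrite normrN nu0; split => //; split.
    by rewrite TN scalerN opprK addrC -opprB normrN.
  by rewrite AN (ipNr hX) oppr_ge0 ltW.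
pose yd := y + l *: u.
have hyd : `|yd - y| <= l by rewrite /yd addrC addKr normrZ nu mulr1 gtr0_norm.
have [al0 [[Dx hmin] hres]] := hsel l yd (andP_intro l0 ld0) hyd.
have hxd := ho1 l yd (andP_intro l0 ld1) hyd.
set x := xsel l yd in Dx hmin hres hxd.
set al := alpha l yd in al0 hmin.
set d := x - xdag in hxd.
have hd : `|d| <= sl by rewrite (le_trans hxd) // ler_piMl.
have inBx : ball xdag rho x.
  rewrite -ball_normE /= -normrN opprB -/d (le_lt_trans hd) //.
  by rewrite (lt_trans slr) // ltr_pdivrMr // ltr_pMr //; lra.
have dsl : `|xdag - x| < rho / 2 by rewrite -normrN opprB -/d (le_lt_trans hd).
have Bx : exists e0 : R, 0 < e0 /\ ball x e0 `<=` D.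
  exists (rho / 2); split; first by rewrite divr_gt0.
  move=> z; rewrite -ball_normE /= => hz; apply: hBD; rewrite -ball_normE /=.
  apply: (le_lt_trans (ler_distD x xdag z)); lra.
have dx := hdiff _ inBx.
have focx := foc hX hY Bx dx (conj Dx hmin) (ltW al0).
have [Rx [_ [hRx1 hRx2]]] := hR x xdag inBx inB0.
rewrite -/d in hRx2.
set r := F x - yd in hres focx.
have dsl1 : `|d| <= 1 by rewrite (le_trans hd) // ltW.
have Rxb h : `|Rx h| <= (1 + kap) * `|h|.
  have -> : Rx h = h - (h - Rx h) by rewrite opprB addrC subrK.
  apply: (le_trans (ler_normB _ _)); rewrite mulrDl mul1r lerD2l.
  apply: (le_trans (hRx2 h)); rewrite ler_wpM2r // ler_piMr //.
pose g := xstar - x.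
have ge : g = e - d by rewrite /g /e /d subBB subrr subr0.
have hge : `|e| <= `|g| + `|d|.
  by rewrite ge; apply: (le_trans _ (ler_normD _ _)); rewrite subrK.
have g2 : `|e| / 2 < `|g| by lra.
have g0 : 0 < `|g| by apply: (lt_trans _ g2); rewrite divr_gt0.
have step2 : al * `|g| ^+ 2 = ipY r (A (Rx g)).
  have := focx g; rewrite hRx1 -/A.
  have -> : x - xstar = - g by rewrite /g opprB.
  rewrite (ipNl hX) (ipnn hX) mulrN => /eqP; rewrite subr_eq0 => /eqP <-.
  by [].
have alC : al <= C * l.
  have h1 : al * `|g| ^+ 2 <= tau * l * MA * (1 + kap) * `|g|.
    rewrite step2; apply: (le_trans (ler_norm _)); apply: (le_trans (CS hY _ _)).
    apply: (le_trans (y := (tau * l) * (MA * ((1 + kap) * `|g|)))).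
      apply: ler_pM => //; apply: (le_trans (hMA _)); rewrite ler_pM2l //.
    by rewrite !mulrA.
  have h2 : al * `|g| <= tau * l * MA * (1 + kap).
    rewrite -(ler_pM2r g0); apply: (le_trans _ h1).
    by rewrite expr2 mulrA.
  have h3 : al * `|e| <= 2 * (tau * l * MA * (1 + kap)).
    apply: (le_trans (y := al * (2 * `|g|))).
      by rewrite ler_pM2l //; lra.
    by rewrite mulrCA ler_pM2l.
  rewrite -ler_pdivlMr // in h3.
  apply: (le_trans h3); rewrite le_eqVlt; apply/orP; left; apply/eqP.
  by rewrite /C; field; rewrite ?gt_eqF.
pose w := Astar u.
have w2 : `|w| ^+ 2 <= 2 * l.
  rewrite -ipT.
  have -> : ipY (T u) u = l + ipY (T u - l *: u) u.
    by rewrite (ipBl hY) (ipZl hY) (ipnn hY) nu expr1n mulr1 addrC subrK.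
  have : ipY (T u - l *: u) u <= eta.
    apply: (le_trans (ler_norm _)); apply: (le_trans (CS hY _ _)).
    by rewrite nu mulr1 ltW.
  lra.
have wsl : `|w| <= 2 * sl.
  rewrite -(@ler_pXn2r _ 2) //; try nn.
  rewrite exprMn sl2; lra.
have DW0 : 0 <= `|d| * `|w| by rewrite mulr_ge0.
have DWl : `|d| * `|w| <= 2 * eps * l.
  apply: (le_trans (y := (eps * sl) * (2 * sl))); first by apply: ler_pM.
  have er : forall a b : R, a * b * (2 * b) = 2 * a * b ^+ 2 by move=> a b; ring.
  by rewrite er sl2.
have PD : ipX d w <= `|d| * `|w| by apply: (le_trans (ler_norm _)); exact: CS hX _ _.
have D2b : `|d| ^+ 2 <= eps * l.
  have : `|d| ^+ 2 <= (eps * sl) ^+ 2 by rewrite ler_pXn2r //; try nn.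
  move=> hh; apply: (le_trans hh); rewrite exprMn sl2.
  apply: ler_wpM2r; first exact: ltW.
  by rewrite expr2 ler_piMl // ltW.
have inBs : forall s : R, 0 <= s <= 1 -> ball xdag rho (s *: d + xdag).
  move=> s /andP[s0 s1]; rewrite -ball_normE /= opprD addrCA subrr addr0 normrN normrZ ger0_norm //.
  have : s * `|d| <= `|d| by rewrite ler_piMl.
  lra.
have E1b : `|ipY (F (d + xdag) - F xdag - A d) u| <= Mk * `|d| ^+ 2.
  apply: (rem_bound hY).
    by move=> s s01; apply: hdiff; apply: inBs.
  move=> s s01.
  have [Rs [_ [hRs1 hRs2]]] := hR _ _ (inBs s s01) inB0.
  rewrite hRs1 -/A -linearB; apply: (le_trans (CS hY _ _)); rewrite nu mulr1.
  apply: (le_trans (hMA _)); rewrite /Mk -mulrA ler_pM2l // -normrN opprB.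
  apply: (le_trans (hRs2 d)); rewrite addrK normrZ ger0_norm; last by case/andP: s01.
  rewrite expr2 !mulrA; apply: ler_wpM2r => //; rewrite -mulrA; apply: ler_wpM2l => //.
  by case/andP: s01 => s0 s1; rewrite ler_piMl.
have dx' : d + xdag = x by rewrite /d subrK.
rewrite dx' Fdag in E1b.
set Pd := ipX d w.
set ie := ipX e w.
set E1 := ipY (F x - y - A d) u in E1b.
set E3 := ipY r (T u - l *: u).
set E2 := ipY r (A (Rx w - w)).
have eE1 : E1 = ipY (F x - y) u - Pd by rewrite /E1 (ipBl hY) hAstar.
have Eq : (l + al) * Pd = l * l + al * ie - l * E1 - E3 - E2.
  apply: eq_alg.
  have := focx w; rewrite hRx1 -/A.
  have -> : A (Rx w) = T u + A (Rx w - w) by rewrite linearB /T addrC subrK.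
  have -> : T u = l *: u + (T u - l *: u) by rewrite addrC subrK.
  rewrite !(ipDr hY) (ipZr hY) -/E3 -/E2.
  have -> : ipY r u = E1 + Pd - l.
    rewrite /r /yd opprD addrA (ipBl hY) (ipZl hY) (ipnn hY) nu expr1n mulr1.
    by rewrite eE1 subrK.
  have -> : x - xstar = d - e by rewrite /d /e subBB subrr subr0.
  by rewrite (ipBl hX) -/Pd -/ie -(ipDr hY) -/E3.
have E1le : E1 <= Mk * `|d| ^+ 2 by apply: le_trans (ler_norm _) E1b.
have E3le : E3 <= l * l / 4.
  apply: (le_trans (ler_norm _)); apply: (le_trans (CS hY _ _)).
  apply: (le_trans (y := (tau * l) * eta)); first by apply: ler_pM => //; exact: ltW.
  have ee : forall a b c : R, a * b * c = b * (a * c) by move=> a b c; ring.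
  by rewrite ee -mulrA ler_pM2l.
have E2le : E2 <= tau * l * Mk * (`|d| * `|w|).
  apply: (le_trans (ler_norm _)); apply: (le_trans (CS hY _ _)).
  apply: (le_trans (y := (tau * l) * (MA * (kap * `|d| * `|w|)))).
    apply: ler_pM => //.
    apply: (le_trans (hMA _)); rewrite ler_pM2l // -normrN opprB; exact: hRx2.
  have ee2 : forall a1 b1 c1 e1 f1 g1 : R,
      a1 * b1 * (c1 * (e1 * f1 * g1)) = a1 * b1 * (c1 * e1) * (f1 * g1).
    by move=> a1 b1 c1 e1 f1 g1; ring.
  by rewrite ee2.
exact: (final_num l0 (ltW al0) alC C0 (ltW eps0) PD DW0 DWl hsign Eq E1le D2b Mk0 E3le E2le (ltW htau) heps).
Unshelve. all: by end_near.
Qed.
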